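(* In the setting of the context, let $\Lambda$ be a linear relation in the vertex space $\mathcal F$ and $$\Lambda_C=\{(V_CW^{-1}f',\ V_CW^{-1}f):\ (f,f')\in\Lambda\}\subset\mathcal G\oplus\mathcal G.$$ Let $D^{\Lambda_W}$ be the restriction of $D^{max}$ to $\{\Phi\in\widetilde H^1(\mathbf G;\mathbb C^2):(W\Gamma^1\Phi,W\Gamma^2\Phi)\in\Lambda\}$ and $D^{\Lambda_C}$ the restriction of $D^{max}$ to $\{\Phi\in\widetilde H^1(\mathbf G;\mathbb C^2):(\Gamma^1\Phi,\Gamma^2\Phi)\in\Lambda_C\}$. Then $$D^{\Lambda_C}C=-CD^{\Lambda_W}.$$
   Context: Let $m\ge0$. A finite oriented metric graph $\mathbf G$ has a finite nonempty vertex set $\mathcal V$, finite sets $\mathcal I$ (internal) and $\mathcal E$ (external) of edges, $\mathcal J=\mathcal I\cup\mathcal E\ne\emptyset$, no loops. Each internal edge $i$ is identified with $I_i=(a_i,b_i)$, $a_i$ and $b_i$ corresponding to its initial and terminal vertex. An external edge $e$ is identified with $(a_e,+\infty)$ ($\rho(e)=-1$) or $(-\infty,b_e)$ ($\rho(e)=1$), finite endpoint $\partial e$ corresponding to its vertex. $\mathscr H=\bigoplus_jL^2(I_j;\mathbb C^2)$, $\widetilde H^1=\bigoplus_jH^1(I_j;\mathbb C^2)$, $\Phi=(\phi_j)_j$; $D^{max}$ acts edgewise by $-i\sigma_1\phi_j'+m\sigma_3\phi_j$ ($\sigma_1=\begin{pmatrix}0&1\\1&0\end{pmatrix}$, $\sigma_3=\operatorname{diag}(1,-1)$).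 $\mathcal G=\bigoplus_j\mathcal G_j$, $\mathcal G_i=\mathbb C^2$, $\mathcal G_e=\mathbb C$; $\Gamma^k=\bigoplus_j\Gamma^k_j$, $\Gamma^1_i\Phi=(\phi_i^1(a_i),\phi_i^1(b_i))^T$, $\Gamma^2_i\Phi=(i\phi_i^2(a_i),-i\phi_i^2(b_i))^T$, $\Gamma^1_e\Phi=\phi_e^1(\partial e)$, $\Gamma^2_e\Phi=-i\rho(e)\phi^2_e(\partial e)$. Vertex space $\mathcal F=\bigoplus_v\mathbb C^{\deg v}$; coordinates of $\mathcal G$ and $\mathcal F$ are labelled by pairs $(j,v)$, $v$ a vertex endpoint of $j$, ordered in $\mathcal G$ edge by edge (initial vertex first for internal edges) and in $\mathcal F$ vertex by vertex (then by the fixed edge order); $W:\mathcal G\to\mathcal F$ is the permutation matrix sending coordinate $(j,v)$ of $\mathcal G$ to coordinate $(j,v)$ of $\mathcal F$. $C\Phi=(\sigma_1\overline{\phi_j})_j$ (antilinear). $V_C=\bigoplus_jV_{C,j}$ is the antilinear map on $\mathcal G$ with $V_{C,j}\omega_j=i\sigma_3\overline{\omega_j}$ for $j\in\mathcal I$ and $V_{C,j}\omega_j=-i\rho(j)\overline{\omega_j}$ for $j\in\mathcal E$. *)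

(* Defs.v *)
From HB Require Import structures.
From mathcomp Require Import all_boot all_order all_algebra.
From mathcomp Require Import all_classical all_reals all_analysis.
From mathcomp Require Import complex.
Set Implicit Arguments.
Unset Strict Implicit.
Unset Printing Implicit Defensive.
Import Order.TTheory GRing.Theory Num.Theory.
Local Open Scope ring_scope.
Local Open Scope complex_scope.
Local Open Scope classical_set_scope.

(* Internal edge i ~ (ai i, bi i), initial vertex vinit i, terminal    *)
(* vertex vterm i.  External edge e has finite endpoint ce e attached   *)
(* to vertex vext e;  rho e = true  encodes rho(e) = 1, edge (-oo,ce e) *)
(*                    rho e = false encodes rho(e) = -1, edge (ce e,+oo)*)
Record metric_graph (R : realType) := MetricGraph {
  gV : finType;
  gI : finType;
  gE : finType;
  vinit : gI -> gV;
  vterm : gI -> gV;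
  vext : gE -> gV;
  ai : gI -> R;
  bi : gI -> R;
  ce : gE -> R;
  rho : gE -> bool;
  gV_nonempty : (0 < #|gV|)%N;
  gJ_nonempty : (0 < #|gI| + #|gE|)%N;
  ab_lt : forall i, ai i < bi i;
  no_loops : forall i, vinit i != vterm i
}.

Section Graph.
Variable R : realType.
Variable G : metric_graph R.

Local Notation C := R[i].
Local Notation mu := (@lebesgue_measure R).

Definition gJ := (gI G + gE G)%type.

Definition rhoC (e : gE G) : C := if rho e then 1 else -1.

Definition edge_open (j : gJ) : set R :=
  match j with
  | inl i => `](ai i), (bi i)[
  | inr e => if rho e then `]-oo, (ce e)[ else `](ce e), +oo[
  end.
Definition edge_closed (j : gJ) : set R :=
  match j with
  | inl i => `[(ai i), (bi i)]
  | inr e => if rho e then `]-oo, (ce e)] else `[(ce e), +oo[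
  end.

(* Coordinates of G: pairs (j, v), v a vertex endpoint of j.
   inl (i, false) = (i, initial vertex), inl (i, true) = (i, terminal vertex),
   inr e = (e, its vertex). *)
Definition halfedge := ((gI G * bool) + gE G)%type.
Definition hvert (h : halfedge) : gV G :=
  match h with
  | inl (i, false) => vinit i
  | inl (i, true) => vterm i
  | inr e => vext e
  end.

(* boundary space  G = (+)_j G_j,  G_i = C^2, G_e = C *)
Definition bspace := halfedge -> C.
(* vertex space F = (+)_v C^{deg v}: coordinates grouped vertex by vertex,
   the deg v coordinates at v being the pairs (j, v) *)
Definition vidx := {v : gV G & {h : halfedge | hvert h == v}}.
Definition vspace := vidx -> C.

(* W : G -> F sends coordinate (j,v) of G to coordinate (j,v) of F *)
Definition Wmap (g : bspace) : vspace := fun p => g (sval (projT2 p)).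
Definition Winv (f : vspace) : bspace :=
  fun h => f (existT _ (hvert h) (exist _ h (eqxx (hvert h)))).

Definition VC (w : bspace) : bspace := fun h =>
  match h with
  | inl (i, false) => 'i * (w h)^*
  | inl (i, true) => - 'i * (w h)^*
  | inr e => - 'i * rhoC e * (w h)^*
  end.

Definition linear_relation (L : vspace -> vspace -> Prop) :=
  L (fun _ => 0) (fun _ => 0) /\
  forall (a : C) f1 f1' f2 f2', L f1 f1' -> L f2 f2' ->
    L (fun p => a * f1 p + f2 p) (fun p => a * f1' p + f2' p).

Definition LambdaC (L : vspace -> vspace -> Prop) (g1 g2 : bspace) : Prop :=
  exists f f', L f f' /\ g1 = VC (Winv f') /\ g2 = VC (Winv f).

Definition c1 : 'I_2 := ord0.
Definition c2 : 'I_2 := ord_max.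

Definition L2c (D : set R) (f : R -> C) : Prop :=
  measurable_fun D (fun x => complex.Re (f x)) /\
  measurable_fun D (fun x => complex.Im (f x)) /\
  mu.-integrable D
    (fun x => ((complex.Re (f x)) ^+ 2 + (complex.Im (f x)) ^+ 2)%:E).

Definition L2v (D : set R) (f : R -> 'cV[C]_2) : Prop :=
  forall k, L2c D (fun x => f x k ord0).

(* g is a derivative of f on the (closed) interval K, in the sense of
   absolute continuity: f y - f x = \int_x^y g for all x <= y in K *)
Definition is_primitive (K : set R) (f g : R -> C) : Prop :=
  forall x y, K x -> K y -> x <= y ->
    ((complex.Re (f y) - complex.Re (f x))%:E =
       (\int[mu]_(t in `[x, y]) (complex.Re (g t))%:E)%E) /\
    ((complex.Im (f y) - complex.Im (f x))%:E =
       (\int[mu]_(t in `[x, y]) (complex.Im (g t))%:E)%E).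

(* f is (the continuous representative, on the closed edge, of) an
   element of H^1(I_j; C^2) with weak derivative g *)
Definition H1_edge (j : gJ) (f g : R -> 'cV[C]_2) : Prop :=
  L2v (edge_open j) f /\ L2v (edge_open j) g /\
  forall k, is_primitive (edge_closed j) (fun x => f x k ord0)
                                         (fun x => g x k ord0).

(* elements of the Hilbert space H = (+)_j L^2(I_j; C^2), via representatives *)
Definition gfun := gJ -> R -> 'cV[C]_2.
Definition inH (Phi : gfun) : Prop := forall j, L2v (edge_open j) (Phi j).
Definition aeeq (Phi Psi : gfun) : Prop :=
  forall j, {ae mu, forall x, edge_open j x -> Phi j x = Psi j x}.

Definition sigma1 : 'M[C]_2 := \matrix_(k, l) (if k == l then 0 else 1).
Definition sigma3 : 'M[C]_2 :=
  \matrix_(k, l) (if k == l then (if k == c1 then 1 else -1) else 0).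

Definition Cop (Phi : gfun) : gfun :=
  fun j x => sigma1 *m map_mx (fun z : C => z^*) (Phi j x).

Definition Dexpr (m : R) (Phi dPhi : gfun) : gfun :=
  fun j x => - 'i *: (sigma1 *m dPhi j x) + (m%:C) *: (sigma3 *m Phi j x).

Definition Gamma1 (Phi : gfun) : bspace := fun h =>
  match h with
  | inl (i, false) => Phi (inl i) (ai i) c1 ord0
  | inl (i, true) => Phi (inl i) (bi i) c1 ord0
  | inr e => Phi (inr e) (ce e) c1 ord0
  end.
Definition Gamma2 (Phi : gfun) : bspace := fun h =>
  match h with
  | inl (i, false) => 'i * Phi (inl i) (ai i) c2 ord0
  | inl (i, true) => - 'i * Phi (inl i) (bi i) c2 ord0
  | inr e => - 'i * rhoC e * Phi (inr e) (ce e) c2 ord0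
  end.

(* Graph of the restriction of D^max to
   {Phi in H~^1 : (Gamma^1 Phi, Gamma^2 Phi) in B}, as a relation on H
   (closed under a.e. equality): DB Phi Psi  <->  Phi in dom, Psi = D Phi. *)
Definition D_bc (m : R) (B : bspace -> bspace -> Prop) (Phi Psi : gfun) : Prop :=
  inH Phi /\ inH Psi /\
  exists Phi0 dPhi0 : gfun,
    (forall j, H1_edge j (Phi0 j) (dPhi0 j)) /\
    aeeq Phi Phi0 /\
    B (Gamma1 Phi0) (Gamma2 Phi0) /\
    aeeq Psi (Dexpr m Phi0 dPhi0).

Definition D_LambdaW (m : R) (L : vspace -> vspace -> Prop) :=
  D_bc m (fun g1 g2 => L (Wmap g1) (Wmap g2)).
Definition D_LambdaC (m : R) (L : vspace -> vspace -> Prop) :=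
  D_bc m (LambdaC L).

End Graph.

(* Main.v *)
Require Import Defs.
From HB Require Import structures.
From mathcomp Require Import all_boot all_order all_algebra.
From mathcomp Require Import all_classical all_reals all_analysis.
From mathcomp Require Import complex ring.
Import Order.TTheory GRing.Theory Num.Theory.
Local Open Scope ring_scope.
Set Implicit Arguments.
Unset Strict Implicit.

Lemma fin_adde_def (R : realType) (a b : \bar R) : (a + b)%E \is a fin_num -> (a +? b)%E.
Proof. by move: a b => [a| |] [b| |]. Qed.

Section S.
Variable R : realType.
Variable G : metric_graph R.
Local Notation C := R[i].

Lemma ord2_cases (k : 'I_2) : k = c1 \/ k = c2.
Proof. case: k => [[|[|n]] //] hk; [left|right]; exact: val_inj. Qed.

Lemma lift00 : lift ord0 ord0 = c2 :> 'I_2.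
Proof. exact: val_inj. Qed.

Lemma conjcE (z : C) : conjc z = z^*.
Proof. by []. Qed.

Lemma Cop1 (P : gfun G) j x : Cop P j x c1 ord0 = (P j x c2 ord0)^*.
Proof. by rewrite /Cop !mxE big_ord_recl big_ord1 !mxE /= lift00 mul0r add0r mul1r. Qed.
Lemma Cop2 (P : gfun G) j x : Cop P j x c2 ord0 = (P j x c1 ord0)^*.
Proof. by rewrite /Cop !mxE big_ord_recl big_ord1 !mxE /= lift00 mul0r addr0 mul1r. Qed.
Lemma Dexpr1 m (P dP : gfun G) j x : Dexpr m P dP j x c1 ord0 = - 'i * dP j x c2 ord0 + m%:C%C * P j x c1 ord0.
Proof. by rewrite /Dexpr !mxE !big_ord_recl !big_ord0 !mxE /= lift00 !mul0r !mul1r !add0r !addr0. Qed.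
Lemma Dexpr2 m (P dP : gfun G) j x : Dexpr m P dP j x c2 ord0 = - 'i * dP j x c1 ord0 - m%:C%C * P j x c2 ord0.
Proof. rewrite /Dexpr !mxE !big_ord_recl !big_ord0 !mxE /= lift00 !mul0r !mul1r !add0r !addr0 mulN1r mulrN; reflexivity. Qed.
Lemma oppmxE (M : 'cV[C]_2) k : (- M) k ord0 = - M k ord0.
Proof. by rewrite mxE. Qed.
Lemma conj_real (m : R) : (m%:C%C)^* = m%:C%C :> C.
Proof. exact: conjc_real. Qed.

Lemma conjK (z : C) : z^*^* = z.
Proof. exact: conjCK. Qed.

Lemma CopK (P : gfun G) : Cop (Cop P) = P.
Proof.
apply/funext => j; apply/funext => x; apply/matrixP => k l.
have -> : l = ord0 by apply: val_inj; case: l => [[]].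
case: (ord2_cases k) => ->; rewrite ?Cop1 ?Cop2 ?Cop1 ?Cop2; exact: conjCK.
Qed.

Lemma Dexpr_Cop m (P dP : gfun G) j x :
  Dexpr m (Cop P) (Cop dP) j x = - Cop (Dexpr m P dP) j x.
Proof.
apply/matrixP => k l.
have -> : l = ord0 by apply: val_inj; case: l => [[]].
rewrite oppmxE.
case: (ord2_cases k) => ->; rewrite ?Cop1 ?Cop2 ?Dexpr1 ?Dexpr2 ?Cop1 ?Cop2.
- rewrite rmorphB /= !rmorphM /= rmorphN /= conjCi conj_real opprK; ring.
- rewrite rmorphD /= !rmorphM /= rmorphN /= conjCi conj_real opprK; ring.
Qed.

Lemma rhoC_conj (e : gE G) : (rhoC e)^* = rhoC e.
Proof. by rewrite /rhoC; case: (rho e); rewrite ?rmorphN rmorph1. Qed.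

Lemma rhoC_sq (e : gE G) : rhoC e * rhoC e = 1.
Proof. by rewrite /rhoC; case: (rho e); rewrite ?mulrNN mulr1. Qed.

Lemma ii : 'i * 'i = -1 :> C.
Proof. by rewrite -expr2 sqrCi. Qed.

Lemma VCK (w : bspace G) : VC (VC w) = w.
Proof.
apply/funext => -[[i []]|e] /=; rewrite !rmorphM /= ?rmorphN /= ?conjCi ?rhoC_conj conjK.
- by rewrite opprK mulrA mulNr ii opprK mul1r.
- by rewrite mulrA mulrN ii opprK mul1r.
- rewrite opprK.
  rewrite (_ : - 'i * rhoC e * ('i * rhoC e * w (inr e)) = - ('i * 'i) * (rhoC e * rhoC e) * w (inr e)); last by ring.
  by rewrite ii rhoC_sq opprK !mul1r.
Qed.

Lemma Gamma2_Cop (P : gfun G) : Gamma2 (Cop P) = VC (Gamma1 P).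
Proof. by apply/funext => -[[i []]|e] /=; rewrite Cop2. Qed.

Lemma Gamma1_Cop (P : gfun G) : Gamma1 (Cop P) = VC (Gamma2 P).
Proof. by rewrite -[in RHS](CopK P) Gamma2_Cop VCK. Qed.

Local Notation mu := (@lebesgue_measure R).

Lemma ReJ (z : C) : complex.Re z^* = complex.Re z.
Proof. by case: z. Qed.
Lemma ImJ (z : C) : complex.Im z^* = - complex.Im z.
Proof. by case: z. Qed.
Lemma ReN (z : C) : complex.Re (- z) = - complex.Re z.
Proof. by case: z. Qed.
Lemma ImN (z : C) : complex.Im (- z) = - complex.Im z.
Proof. by case: z. Qed.

Lemma L2c_conj D (f : R -> C) : L2c D f -> L2c D (fun x => (f x)^*).
Proof.
case=> mRe [mIm hint]; split; [|split].
- by rewrite (_ : (fun x => _) = (fun x => complex.Re (f x))) //; apply/funext => x; rewrite ReJ.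
- rewrite (_ : (fun x => _) = \- (fun x => complex.Im (f x))); last by apply/funext => x; rewrite ImJ.
  exact: measurable_realfun.measurable_funN.
- rewrite (_ : (fun x => _) = (fun x => ((complex.Re (f x)) ^+ 2 + (complex.Im (f x)) ^+ 2)%:E)) //.
  by apply/funext => x; rewrite ReJ ImJ sqrrN.
Qed.

Lemma L2c_opp D (f : R -> C) : L2c D f -> L2c D (fun x => - f x).
Proof.
case=> mRe [mIm hint]; split; [|split].
- rewrite (_ : (fun x => _) = \- (fun x => complex.Re (f x))); last by apply/funext => x; rewrite ReN.
  exact: measurable_realfun.measurable_funN.
- rewrite (_ : (fun x => _) = \- (fun x => complex.Im (f x))); last by apply/funext => x; rewrite ImN.
  exact: measurable_realfun.measurable_funN.
- rewrite (_ : (fun x => _) = (fun x => ((complex.Re (f x)) ^+ 2 + (complex.Im (f x)) ^+ 2)%:E)) //.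
  by apply/funext => x; rewrite ReN ImN !sqrrN.
Qed.

Lemma L2v_Cop D (P : gfun G) j : L2v D (P j) -> L2v D (Cop P j).
Proof.
move=> h k; case: (ord2_cases k) => ->.
- rewrite (_ : (fun x => _) = (fun x => (P j x c2 ord0)^*)); first exact: L2c_conj.
  by apply/funext => x; rewrite Cop1.
- rewrite (_ : (fun x => _) = (fun x => (P j x c1 ord0)^*)); first exact: L2c_conj.
  by apply/funext => x; rewrite Cop2.
Qed.

Lemma L2v_opp D (f : R -> 'cV[C]_2) : L2v D f -> L2v D (fun x => - f x).
Proof.
move=> h k; rewrite (_ : (fun x => _) = (fun x => - f x k ord0)); first exact: L2c_opp.
by apply/funext => x; rewrite mxE.
Qed.



Lemma is_primitive_conj K (f g : R -> C) :
  is_primitive K f g -> is_primitive K (fun x => (f x)^*) (fun x => (g x)^*).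
Proof.
move=> h x y Kx Ky xy; have [h1 h2] := h x y Kx Ky xy; split.
- rewrite !ReJ h1; apply: eq_integral => t _; by rewrite ReJ.
- rewrite !ImJ (_ : (fun t => _) = (fun t => - (complex.Im (g t))%:E)%E); last first.
    by apply/funext => t; rewrite ImJ EFinN.
  rewrite integralN; first by rewrite -h2 -EFinN; congr EFin; ring.
  set a := (X in (X +? _)%E); set b := (X in (_ +? X)%E).
  have hfin : (a + b)%E \is a fin_num by rewrite /a /b -integralE -h2.
  by move: a b hfin => [a| |] [b| |].
Qed.


Lemma H1_edge_Cop j (P dP : gfun G) : H1_edge j (P j) (dP j) -> H1_edge j (Cop P j) (Cop dP j).
Proof.
case=> hP [hdP hpr]; split; [exact: L2v_Cop|split; [exact: L2v_Cop|]].
move=> k; case: (ord2_cases k) => ->.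
- rewrite (_ : (fun x => Cop P j x c1 ord0) = (fun x => (P j x c2 ord0)^*)); last by apply/funext => x; rewrite Cop1.
  rewrite (_ : (fun x => Cop dP j x c1 ord0) = (fun x => (dP j x c2 ord0)^*)); last by apply/funext => x; rewrite Cop1.
  exact: is_primitive_conj.
- rewrite (_ : (fun x => Cop P j x c2 ord0) = (fun x => (P j x c1 ord0)^*)); last by apply/funext => x; rewrite Cop2.
  rewrite (_ : (fun x => Cop dP j x c2 ord0) = (fun x => (dP j x c1 ord0)^*)); last by apply/funext => x; rewrite Cop2.
  exact: is_primitive_conj.
Qed.

Lemma inH_Cop (P : gfun G) : inH P -> inH (Cop P).
Proof. by move=> h j; apply: L2v_Cop. Qed.

Lemma inH_opp (P : gfun G) : inH P -> inH (fun j x => - P j x).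
Proof. by move=> h j; apply: L2v_opp. Qed.

Lemma Cop_opp (P : gfun G) : Cop (fun j x => - P j x) = (fun j x => - Cop P j x).
Proof.
apply/funext => j; apply/funext => x; apply/matrixP => k l.
have -> : l = ord0 by apply: val_inj; case: l => [[]].
rewrite oppmxE; case: (ord2_cases k) => ->; rewrite ?Cop1 ?Cop2 oppmxE; exact: rmorphN.
Qed.

Lemma aeeq_refl (P : gfun G) : aeeq P P.
Proof. by move=> j; apply: aeW => x _. Qed.

Lemma aeeq_trans (P Q S : gfun G) : aeeq P Q -> aeeq Q S -> aeeq P S.
Proof.
move=> h1 h2 j; have FF : Filter (nbhs (almost_everywhere mu)) := ae_filter_ringOfSetsType mu.
apply: filterS2 (h1 j) (h2 j) => x e1 e2 hx.
by rewrite e1 ?e2.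
Qed.

Lemma aeeq_Cop (P Q : gfun G) : aeeq P Q -> aeeq (Cop P) (Cop Q).
Proof. move=> h j; have FF : Filter (nbhs (almost_everywhere mu)) := ae_filter_ringOfSetsType mu.
by apply: filterS (h j) => x e hx; rewrite /Cop e. Qed.

Lemma aeeq_opp (P Q : gfun G) : aeeq P Q -> aeeq (fun j x => - P j x) (fun j x => - Q j x).
Proof. move=> h j; have FF : Filter (nbhs (almost_everywhere mu)) := ae_filter_ringOfSetsType mu.
by apply: filterS (h j) => x e hx; rewrite e. Qed.

Lemma WK (f : vspace G) : Wmap (Winv f) = f.
Proof.
apply/funext => -[v [h hv]]; rewrite /Wmap /Winv /=.
have E := eqP hv; subst v.
by rewrite (bool_irrelevance hv (eqxx (hvert h))).
Qed.
End S.

Theorem theorem4p20 (R : realType) (G : metric_graph R) (m : R) (hm : 0 <= m)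
    (Lambda : vspace G -> vspace G -> Prop) (hL : linear_relation Lambda)
    (Phi Psi : gfun G) (hPhi : inH Phi) (hPsi : inH Psi) :
  D_LambdaC m Lambda (Cop Phi) Psi <->
  exists Psi0 : gfun G,
    D_LambdaW m Lambda Phi Psi0 /\
    aeeq Psi (fun j x => - Cop Psi0 j x).
Proof.
split.
- case=> _ [_ [Phi0 [dPhi0 [hH [hae [hLC hD]]]]]].
  exists (fun j x => - Cop Psi j x); split.
  + split; first exact: hPhi.
    split; first by apply: inH_opp; apply: inH_Cop.
    exists (Cop Phi0), (Cop dPhi0); split; first by move=> j; apply: H1_edge_Cop.
    split; first by rewrite -[Phi](CopK Phi); apply: aeeq_Cop.
    split.
    * case: hLC => f [f' [Lff [e1 e2]]].
      by rewrite Gamma1_Cop Gamma2_Cop e1 e2 !VCK !WK.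
    * rewrite (_ : Dexpr m (Cop Phi0) (Cop dPhi0) = fun j x => - Cop (Dexpr m Phi0 dPhi0) j x).
        by apply: aeeq_opp; apply: aeeq_Cop.
      by apply/funext => j; apply/funext => x; rewrite Dexpr_Cop.
  + rewrite Cop_opp (_ : (fun j x => - - Cop (Cop Psi) j x) = Psi); first exact: aeeq_refl.
    by apply/funext => j; apply/funext => x; rewrite opprK CopK.
- case=> Psi0 [[_ [hPsi0 [Phi1 [dPhi1 [hH [hae [hL1 hD]]]]]]] hPsiae].
  split; first exact: inH_Cop.
  split; first exact: hPsi.
  exists (Cop Phi1), (Cop dPhi1); split; first by move=> j; apply: H1_edge_Cop.
  split; first exact: aeeq_Cop.
  split.
  + exists (Wmap (Gamma1 Phi1)), (Wmap (Gamma2 Phi1)); split; first exact: hL1.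
    by rewrite Gamma1_Cop Gamma2_Cop.
  + rewrite (_ : Dexpr m (Cop Phi1) (Cop dPhi1) = fun j x => - Cop (Dexpr m Phi1 dPhi1) j x).
      by apply: aeeq_trans hPsiae _; apply: aeeq_opp; apply: aeeq_Cop.
    by apply/funext => j; apply/funext => x; rewrite Dexpr_Cop.
Qed.
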